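(* Let $m\ge 2$ be an integer and write the prime factorisation of $m!$ as $m!=\prod_{p\le m} p^{\alpha_p}$, where the product runs over all primes $p\le m$ and each $\alpha_p\ge 1$. Then for any primes $p<q\le m$, $$\frac{\alpha_p}{\alpha_q}\ge \left\lfloor \frac{q}{p}\right\rfloor.$$ *)

(* Defs.v *)
From mathcomp Require Import all_boot all_order all_algebra.
Definition alpha (m p : nat) : nat := logn p m`!.

(* Main.v *)
Require Import Defs.
From mathcomp Require Import all_boot all_order all_algebra.
Import GRing.Theory Num.Theory.
Local Open Scope ring_scope.

Lemma term_le (m p q i : nat) : (0 < p)%N -> (0 < i)%N ->
  (m %/ q ^ i * (q %/ p) <= m %/ p ^ i)%N.
Proof.
move=> p0 i0.
have pi0 : (0 < p ^ i)%N by rewrite expn_gt0 p0.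
rewrite leq_divRL //.
set k := (q %/ p)%N.
case: (posnP k) => [->|k0]; first by rewrite muln0 mul0n.
apply: leq_trans (leq_divM m (q ^ i)).
rewrite -mulnA leq_mul2l; apply/orP; right.
apply: (@leq_trans (k ^ i * p ^ i)).
  rewrite leq_mul2r; apply/orP; right.
  by clear pi0; case: i i0 => // i _; rewrite expnS leq_pmulr // expn_gt0 k0.
by rewrite -expnMn leq_exp2r // leq_divM.
Qed.

Theorem lemma5 (m p q : nat) :
  (2 <= m)%N -> prime p -> prime q -> (p < q)%N -> (q <= m)%N ->
  ((alpha m p)%:R / (alpha m q)%:R : rat) >= ((q %/ p)%N)%:R.
Proof.
move=> m2 pp pq pq' qm.
have aq : (0 < alpha m q)%N.
  rewrite /alpha -(pfactor_dvdn 1 pq (fact_gt0 m)) expn1.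
  by rewrite dvdn_fact // prime_gt0.
rewrite ler_pdivlMr ?ltr0n // -natrM ler_nat mulnC.
rewrite /alpha !logn_fact // big_distrl /=.
rewrite [X in (X <= _)%N]big_nat_cond [X in (_ <= X)%N]big_nat_cond.
apply: leq_sum => i /andP [/andP [i0 _] _].
exact: (term_le m p q i (prime_gt0 pp) i0).
Qed.
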